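(* Let $\mathcal O[\lambda]$ be the algebra of polynomials in an indeterminate $\lambda$ (commuting with everything in $\mathcal O$) with coefficients in $\mathcal O$, and let $J$ be the 2-sided ideal of $\mathcal O[\lambda]$ generated by $(q-q^{-1})^2\xi_1\lambda+\xi_2$, where $\xi_1=XY-YX$ and $\xi_2=X^2Y^2-Y^2X^2+(q^2+q^{-2})(YXYX-XYXY)$. Then the $\mathbb F$-algebra $\Delta$ is isomorphic to $\mathcal O[\lambda]/J$ (via the map induced by $X\mapsto A$, $Y\mapsto B$, $\lambda\mapsto\gamma$).
   Context: Let $\mathbb F$ be a field and fix a nonzero $q\in\mathbb F$ with $q^4\neq 1$; $[3]_q=q^2+1+q^{-2}$. The universal Askey--Wilson algebra $\Delta$ is the associative $\mathbb F$-algebra with 1 with generators $A,B,C$ subject to the relations that each of $A+\frac{qBC-q^{-1}CB}{q^2-q^{-2}}$, $B+\frac{qCA-q^{-1}AC}{q^2-q^{-2}}$, $C+\frac{qAB-q^{-1}BA}{q^2-q^{-2}}$ is central; $\gamma$ denotes the third of these central elements multiplied by $q+q^{-1}$. The $q$-Onsager algebra $\mathcal O$ is the $\mathbb F$-algebra with generators $X,Y$ and relations $X^3Y-[3]_q X^2YX+[3]_q XYX^2-YX^3 = -(q^2-q^{-2})^2(XY-YX)$ and $Y^3X-[3]_q Y^2XY+[3]_q YXY^2-XY^3 = -(q^2-q^{-2})^2(YX-XY)$. *)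

(* Defs.v *)
From HB Require Import structures.
From mathcomp Require Import all_boot all_order all_algebra.
Set Implicit Arguments. Unset Strict Implicit. Unset Printing Implicit Defensive.
Import GRing.Theory.
Local Open Scope ring_scope.

Section Defs.
Variable F : fieldType.

Definition qint3 (q : F) : F := q ^+ 2 + 1 + q ^- 2.

Definition central3 (R : algType F) (a b c z : R) : Prop :=
  GRing.comm z a /\ GRing.comm z b /\ GRing.comm z c.

Definition aw_cA (q : F) (R : algType F) (a b c : R) : R :=
  a + (q ^+ 2 - q ^- 2)^-1 *: (q *: (b * c) - q^-1 *: (c * b)).
Definition aw_cB (q : F) (R : algType F) (a b c : R) : R :=
  b + (q ^+ 2 - q ^- 2)^-1 *: (q *: (c * a) - q^-1 *: (a * c)).
Definition aw_cC (q : F) (R : algType F) (a b c : R) : R :=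
  c + (q ^+ 2 - q ^- 2)^-1 *: (q *: (a * b) - q^-1 *: (b * a)).

Definition aw_gamma (q : F) (R : algType F) (a b c : R) : R :=
  (q + q^-1) *: aw_cC q a b c.

(* Defining relations of the universal Askey--Wilson algebra Delta
   on generators A, B, C (since A, B, C generate Delta, "central" means
   commuting with A, B and C). *)
Definition aw_rel (q : F) (R : algType F) (a b c : R) : Prop :=
  [/\ central3 a b c (aw_cA q a b c),
      central3 a b c (aw_cB q a b c) &
      central3 a b c (aw_cC q a b c)].

Definition onsager_rel (q : F) (R : algType F) (x y : R) : Prop :=
  x ^+ 3 * y - qint3 q *: (x ^+ 2 * y * x) + qint3 q *: (x * y * x ^+ 2)
    - y * x ^+ 3 = - ((q ^+ 2 - q ^- 2) ^+ 2) *: (x * y - y * x) /\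
  y ^+ 3 * x - qint3 q *: (y ^+ 2 * x * y) + qint3 q *: (y * x * y ^+ 2)
    - x * y ^+ 3 = - ((q ^+ 2 - q ^- 2) ^+ 2) *: (y * x - x * y).

Definition xi1 (R : algType F) (x y : R) : R := x * y - y * x.
Definition xi2 (q : F) (R : algType F) (x y : R) : R :=
  x ^+ 2 * y ^+ 2 - y ^+ 2 * x ^+ 2
  + (q ^+ 2 + q ^- 2) *: (y * x * y * x - x * y * x * y).

(* Defining relations of O[lambda]/J on generators X, Y, lambda:
   the q-Onsager relations for X, Y; lambda commutes with X and Y
   (hence with everything in O[lambda]); and the generator of J vanishes. *)
Definition onsagerJ_rel (q : F) (R : algType F) (x y l : R) : Prop :=
  [/\ onsager_rel q x y,
      GRing.comm l x /\ GRing.comm l y &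
      (q - q^-1) ^+ 2 *: (xi1 x y * l) + xi2 q x y = 0].

Definition presented3 (P : forall R : algType F, R -> R -> R -> Prop)
    (D : algType F) (a b c : D) : Prop :=
  P D a b c /\
  forall (R : algType F) (x y z : R), P R x y z ->
    exists f : {lrmorphism D -> R},
      [/\ f a = x, f b = y, f c = z &
        forall g : {lrmorphism D -> R}, g a = x -> g b = y -> g c = z ->
          forall d, g d = f d].

End Defs.

(* Main.v *)
Require Import Defs.
From HB Require Import structures.
From mathcomp Require Import all_boot all_order all_algebra.
From mathcomp Require Import ring.
Import GRing.Theory.
Local Open Scope ring_scope.

Section Refl.
Variable F : fieldType.
Variable R : algType F.

Inductive tm :=
| TV of nat | T0 | T1 | TAdd of tm & tm | TOpp of tm | TMul of tm & tm
| TSc of F & tm | TPow of tm & nat.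

Variable env : nat -> R.
Fixpoint ev t : R := match t with
 | TV i => env i | T0 => 0 | T1 => 1 | TAdd a b => ev a + ev b | TOpp a => - ev a
 | TMul a b => ev a * ev b | TSc k a => k *: ev a | TPow a n => ev a ^+ n end.

Definition evw (w : seq nat) : R := foldr (fun i acc => env i * acc) 1 w.
Definition evn (s : seq (F * seq nat)) : R := foldr (fun p acc => p.1 *: evw p.2 + acc) 0 s.

Fixpoint nmul (s1 s2 : seq (F * seq nat)) : seq (F * seq nat) :=
  match s1 with [::] => [::]
  | p :: s => [seq (p.1 * p2.1, p.2 ++ p2.2) | p2 <- s2] ++ nmul s s2 end.
Fixpoint npow s n := match n with 0 => [:: (1 : F, [::])] | n.+1 => nmul s (npow s n) end.
Fixpoint norm t : seq (F * seq nat) := match t with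
 | TV i => [:: (1, [:: i])] | T0 => [::] | T1 => [:: (1, [::])]
 | TAdd a b => norm a ++ norm b
 | TOpp a => [seq (- p.1, p.2) | p <- norm a]
 | TMul a b => nmul (norm a) (norm b)
 | TSc k a => [seq (k * p.1, p.2) | p <- norm a]
 | TPow a n => npow (norm a) n end.

Lemma evw_cat w1 w2 : evw (w1 ++ w2) = evw w1 * evw w2.
Proof. by elim: w1 => [|i w IH] /=; rewrite ?mul1r // IH mulrA. Qed.
Lemma evn_cat s1 s2 : evn (s1 ++ s2) = evn s1 + evn s2.
Proof. by elim: s1 => [|p s IH] /=; rewrite ?add0r // IH addrA. Qed.
Lemma evn_sc k s : evn [seq (k * p.1, p.2) | p <- s] = k *: evn s.
Proof. by elim: s => [|p s IH] /=; rewrite ?scaler0 // IH scalerDr scalerA. Qed.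
Lemma evn_opp s : evn [seq (- p.1, p.2) | p <- s] = - evn s.
Proof. by elim: s => [|p s IH] /=; rewrite ?oppr0 // IH opprD scaleNr. Qed.
Lemma evn_mul1 p s : evn [seq (p.1 * p2.1, p.2 ++ p2.2) | p2 <- s] = (p.1 *: evw p.2) * evn s.
Proof.
elim: s => [|p2 s IH] /=; first by rewrite mulr0.
rewrite IH mulrDr evw_cat; congr (_ + _).
by rewrite -scalerAl -scalerAr scalerA.
Qed.
Lemma evn_mul s1 s2 : evn (nmul s1 s2) = evn s1 * evn s2.
Proof. by elim: s1 => [|p s IH] /=; rewrite ?mul0r // evn_cat evn_mul1 IH mulrDl. Qed.
Lemma evn_pow s n : evn (npow s n) = evn s ^+ n.
Proof. elim: n => [|n IH] /=; first by rewrite scale1r addr0 expr0.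
by rewrite evn_mul IH exprS. Qed.
Lemma norm_ok t : evn (norm t) = ev t.
Proof.
elim: t => /=.
- by move=> i; rewrite scale1r mulr1 addr0.
- by [].
- by rewrite scale1r addr0.
- by move=> a Ha b Hb; rewrite evn_cat Ha Hb.
- by move=> a Ha; rewrite evn_opp Ha.
- by move=> a Ha b Hb; rewrite evn_mul Ha Hb.
- by move=> k a Ha; rewrite evn_sc Ha.
- by move=> a Ha n; rewrite evn_pow Ha.
Qed.

Hypothesis cent : forall i, env 0 * env i = env i * env 0.

Definition cw (w : seq nat) := filter (pred1 0%N) w ++ filter (predC1 0%N) w.

Lemma evw0_comm w i : env i * evw (filter (pred1 0%N) w) = evw (filter (pred1 0%N) w) * env i.
Proof.
elim: w => [|j w IH] /=; first by rewrite mulr1 mul1r.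
case: eqP => [->|_] //=.
by rewrite mulrA -cent -mulrA IH mulrA.
Qed.

Lemma evw_cw w : evw (cw w) = evw w.
Proof.
rewrite /cw; elim: w => [|i w IH] //=.
case: eqP => [->|_] /=; first by rewrite IH.
by rewrite evw_cat /= mulrA -evw0_comm -mulrA -evw_cat IH.
Qed.

Definition coefw w (s : seq (F * seq nat)) : F :=
  foldr (fun p acc => if p.2 == w then p.1 + acc else acc) 0 s.

Fixpoint chk (n : nat) (s : seq (F * seq nat)) : Prop :=
  match n with 0 => True | n.+1 =>
    match s with [::] => True
    | p :: _ => coefw p.2 s = 0 /\ chk n (filter (fun p' => p'.2 != p.2) s) end end.

Lemma split_w w s : evn s = coefw w s *: evw w + evn (filter (fun p' => p'.2 != w) s).
Proof.
elim: s => [|p s IH] /=; first by rewrite scale0r addr0.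
case: eqP => [->|_] /=; first by rewrite IH scalerDl addrA.
by rewrite IH addrCA.
Qed.

Lemma chk_ok n s : (size s <= n)%N -> chk n s -> evn s = 0.
Proof.
elim: n s => [|n IH] [|p s] // Hs [H1 H2].
rewrite (split_w p.2 (p :: s)) H1 scale0r add0r.
rewrite /= eqxx /= IH //; last by move: H2; rewrite /= eqxx.
by rewrite size_filter (leq_trans (count_size _ _)).
Qed.

Definition canon (s : seq (F * seq nat)) := [seq (p.1, cw p.2) | p <- s].
Lemma evn_canon s : evn (canon s) = evn s.
Proof. by elim: s => [|p s IH] //=; rewrite IH evw_cw. Qed.

Lemma sound t1 t2 :
  let s := canon (norm (TAdd t1 (TOpp t2))) in chk (size s) s -> ev t1 = ev t2.
Proof.
move=> s /(@chk_ok _ _ (leqnn _)); rewrite evn_canon norm_ok /= => /eqP.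
by rewrite subr_eq0 => /eqP.
Qed.
End Refl.
Arguments sound {F R env} cent t1 t2.

Ltac varidx t c x y :=
  match constr:((t,c)) with (?a,?a) => constr:(0%N) | _ =>
  match constr:((t,x)) with (?a,?a) => constr:(1%N) | _ =>
  match constr:((t,y)) with (?a,?a) => constr:(2%N) end end end.

Ltac reify F c x y t :=
  lazymatch t with
  | @GRing.add _ ?a ?b => let ra := reify F c x y a in let rb := reify F c x y b in constr:(@TAdd F ra rb)
  | @GRing.opp _ ?a => let ra := reify F c x y a in constr:(@TOpp F ra)
  | @GRing.mul _ ?a ?b => let ra := reify F c x y a in let rb := reify F c x y b in constr:(@TMul F ra rb)
  | @GRing.scale _ _ ?k ?a => let ra := reify F c x y a in constr:(@TSc F k ra)
  | @GRing.exp _ ?a ?n => let ra := reify F c x y a in constr:(@TPow F ra n)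
  | @GRing.zero _ => constr:(@T0 F)
  | @GRing.one _ => constr:(@T1 F)
  | _ => let i := varidx t c x y in constr:(@TV F i)
  end.

Ltac solve_nc F c x y :=
  match goal with |- ?l = ?r =>
  let tl := reify F c x y l in let tr := reify F c x y r in
  change (@ev F _ (fun i => nth 0 [:: c; x; y] i) tl = @ev F _ (fun i => nth 0 [:: c; x; y] i) tr);
  apply: (sound _ tl tr) end.

Section Gen.
Variable F : fieldType.
Variable q : F.
Hypothesis hq : q != 0.
Hypothesis h4 : q ^+ 4 != 1.

Lemma sidec : (q != 0) && ((q * q) ^+ 2 - 1 != 0).
Proof. by rewrite hq /= -expr2 -exprM subr_eq0. Qed.

Lemma he : q ^+ 2 - q ^- 2 != 0.
Proof.
apply/eqP => h; move/eqP: h4; apply.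
have : (q ^+ 2 - q ^- 2) * q ^+ 2 = 0 by rewrite h mul0r.
rewrite mulrBl -exprD mulVf ?expf_neq0 // => /eqP; rewrite subr_eq0 => /eqP.
by [].
Qed.

Lemma hk : q + q^-1 != 0.
Proof.
apply/eqP => h; move/eqP: h4; apply.
have : (q + q^-1) * q = 0 by rewrite h mul0r.
rewrite mulrDl mulVf // => /eqP; rewrite addr_eq0 => /eqP h2.
have h2' : q ^+ 2 = -1 by rewrite expr2.
by rewrite (_ : 4 = 2 * 2)%N // exprM h2' sqrrN expr1n.
Qed.

Variable R : algType F.

Local Notation ee := (q ^+ 2 - q ^- 2).
Definition C0 (x y c : R) := c - (q ^+ 2 - q ^- 2)^-1 *: (q *: (x * y) - q^-1 *: (y * x)).
Definition ons1 (x y : R) := x ^+ 3 * y - qint3 q *: (x ^+ 2 * y * x) + qint3 q *: (x * y * x ^+ 2) - y * x ^+ 3.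

Lemma L1 (x y c : R) : GRing.comm c x -> GRing.comm c y ->
 let cA := aw_cA q x y (C0 x y c) in
 y * cA - cA * y = (ee^+2)^-1 *: (ons1 y x + ee^+2 *: (y*x - x*y)).
Proof.
move=> hx hy cA; rewrite /cA /C0 /aw_cA /ons1 /qint3.
solve_nc F c x y.
  by case=> [|[|[|i]]] /=; [done|exact hx|exact hy|rewrite nth_nil mul0r mulr0].
simpl; repeat split; field; first [exact: sidec | done].
Qed.

Lemma L3 (x y c : R) : GRing.comm c x -> GRing.comm c y ->
 let cB := aw_cB q x y (C0 x y c) in
 x * cB - cB * x = (ee^+2)^-1 *: (ons1 x y + ee^+2 *: (x*y - y*x)).
Proof.
move=> hx hy cB; rewrite /cB /C0 /aw_cB /ons1 /qint3.
solve_nc F c x y.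
  by case=> [|[|[|i]]] /=; [done|exact hx|exact hy|rewrite nth_nil mul0r mulr0].
simpl; repeat split; field; first [exact: sidec | done].
Qed.

Definition jel (x y l : R) := (q - q^-1) ^+ 2 *: (xi1 x y * l) + xi2 q x y.

Lemma L2 (x y c : R) : GRing.comm c x -> GRing.comm c y ->
 let cA := aw_cA q x y (C0 x y c) in
 x * cA - cA * x = (ee^+2)^-1 *: jel x y ((q + q^-1) *: c).
Proof.
move=> hx hy cA; rewrite /cA /C0 /aw_cA /jel /xi1 /xi2.
solve_nc F c x y.
  by case=> [|[|[|i]]] /=; [done|exact hx|exact hy|rewrite nth_nil mul0r mulr0].
simpl; repeat split; field; first [exact: sidec | done].
Qed.

Lemma L4 (x y c : R) : GRing.comm c x -> GRing.comm c y ->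
 let cB := aw_cB q x y (C0 x y c) in
 y * cB - cB * y = - ((ee^+2)^-1 *: jel x y ((q + q^-1) *: c)).
Proof.
move=> hx hy cB; rewrite /cB /C0 /aw_cB /jel /xi1 /xi2.
solve_nc F c x y.
  by case=> [|[|[|i]]] /=; [done|exact hx|exact hy|rewrite nth_nil mul0r mulr0].
simpl; repeat split; field; first [exact: sidec | done].
Qed.


Lemma commZ_r (a b : R) (k : F) : GRing.comm a b -> GRing.comm a (k *: b).
Proof. by rewrite /GRing.comm -scalerAr -scalerAl => ->. Qed.

Ltac comm_t := repeat first [assumption | apply: commr_refl | apply: commrD
  | apply: commrN | apply: commrM | apply: commZ_r].

Lemma e2nz : (ee ^+ 2)^-1 != 0.
Proof. by rewrite invr_eq0 expf_neq0 // he. Qed.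

Lemma dirD (x y c : R) : GRing.comm c x -> GRing.comm c y ->
  GRing.comm (aw_cA q x y (C0 x y c)) x -> GRing.comm (aw_cA q x y (C0 x y c)) y ->
  GRing.comm (aw_cB q x y (C0 x y c)) x ->
  onsagerJ_rel q x y ((q + q^-1) *: c).
Proof.
move=> hx hy ax ay bx; split.
- split.
  + move: (L3 _ _ _ hx hy) => /=; rewrite bx subrr => /esym/eqP.
    rewrite scaler_eq0 (negbTE e2nz) /= addr_eq0 => /eqP O.
    by rewrite scaleNr -O.
  + move: (L1 _ _ _ hx hy) => /=; rewrite ay subrr => /esym/eqP.
    rewrite scaler_eq0 (negbTE e2nz) /= addr_eq0 => /eqP O.
    by rewrite scaleNr -O.
- by split; apply/commr_sym/commZ_r/commr_sym.
- move: (L2 _ _ _ hx hy) => /=; rewrite ax subrr => /esym/eqP.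
  by rewrite scaler_eq0 (negbTE e2nz) /= => /eqP.
Qed.

Lemma dirO (x y l : R) : onsagerJ_rel q x y l ->
  aw_rel q x y (C0 x y ((q + q^-1)^-1 *: l)).
Proof.
case=> [[O1 O2] [lx ly] J].
set c := (q + q^-1)^-1 *: l.
have hx : GRing.comm c x by apply/commr_sym/commZ_r/commr_sym.
have hy : GRing.comm c y by apply/commr_sym/commZ_r/commr_sym.
have el : (q + q^-1) *: c = l by rewrite /c scalerA mulfV ?hk // scale1r.
have ax : GRing.comm (aw_cA q x y (C0 x y c)) x.
  move: (L2 _ _ _ hx hy) => /=; rewrite el; rewrite /jel J scaler0 => /eqP.
  by rewrite subr_eq0 => /eqP.
have ay : GRing.comm (aw_cA q x y (C0 x y c)) y.
  move: (L1 _ _ _ hx hy) => /=; rewrite [ons1 y x]O2 scaleNr addNr scaler0 => /eqP.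
  by rewrite subr_eq0 => /eqP.
have bx : GRing.comm (aw_cB q x y (C0 x y c)) x.
  move: (L3 _ _ _ hx hy) => /=; rewrite [ons1 x y]O1 scaleNr addNr scaler0 => /eqP.
  by rewrite subr_eq0 => /eqP.
have by_ : GRing.comm (aw_cB q x y (C0 x y c)) y.
  move: (L4 _ _ _ hx hy) => /=; rewrite el; rewrite /jel J scaler0 oppr0 => /eqP.
  by rewrite subr_eq0 => /eqP.
have cc : GRing.comm c c by [].
have ac : GRing.comm (aw_cA q x y (C0 x y c)) c.
  by apply/commr_sym; rewrite /aw_cA /C0; comm_t.
have bc : GRing.comm (aw_cB q x y (C0 x y c)) c.
  by apply/commr_sym; rewrite /aw_cB /C0; comm_t.
have eC : aw_cC q x y (C0 x y c) = c by rewrite /aw_cC /C0 subrK.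
split.
- by do !split => //; rewrite /C0; comm_t.
- by do !split => //; rewrite /C0; comm_t.
- by rewrite eC; do !split => //; rewrite /C0; comm_t.
Qed.

End Gen.

Arguments C0 {F} q {R} x y c.

Lemma fC0 (F : fieldType) (q : F) (D O : algType F) (f : {lrmorphism O -> D}) (x y c : O) :
  f (C0 q x y c) = C0 q (f x) (f y) (f c).
Proof.
rewrite /C0; etransitivity; first exact: raddfB. congr (_ - _).
etransitivity; first exact: linearZZ. congr (_ *: _).
etransitivity; first exact: raddfB. congr (_ - _).
- etransitivity; first exact: linearZZ. congr (_ *: _). exact: rmorphM.
- etransitivity; first exact: linearZZ. congr (_ *: _). exact: rmorphM.
Qed.
Lemma fcC (F : fieldType) (q : F) (D O : algType F) (f : {lrmorphism O -> D}) (x y c : O) :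
  f (aw_cC q x y c) = aw_cC q (f x) (f y) (f c).
Proof.
rewrite /aw_cC; etransitivity; first exact: raddfD. congr (_ + _).
etransitivity; first exact: linearZZ. congr (_ *: _).
etransitivity; first exact: raddfB. congr (_ - _).
- etransitivity; first exact: linearZZ. congr (_ *: _). exact: rmorphM.
- etransitivity; first exact: linearZZ. congr (_ *: _). exact: rmorphM.
Qed.
Lemma fZ (F : fieldType) (D O : algType F) (f : {lrmorphism O -> D}) (k : F) (x : O) :
  f (k *: x) = k *: f x.
Proof. exact: linearZZ. Qed.

Theorem theorem10p3 (F : fieldType) (q : F) :
  q != 0 -> q ^+ 4 != 1 ->
  forall (Delta : algType F) (A B C : Delta),
    presented3 (aw_rel q) A B C ->
  forall (OJ : algType F) (X Y L : OJ),
    presented3 (onsagerJ_rel q) X Y L ->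
  exists f : {lrmorphism OJ -> Delta},
    [/\ f X = A, f Y = B, f L = aw_gamma q A B C & bijective f].
Proof.
move=> hq h4 Delta A B C [HD UD] OJ X Y L [HO UO].
have hk' := @hk F q hq h4.
set c := aw_cC q A B C.
have eC : C = C0 q A B c by rewrite /C0 /c /aw_cC addrK.
case: (HD) => [[a1 [a2 a3]] [[b1 [b2 b3]] [c1 [c2 c3]]]].
have HJ : onsagerJ_rel q A B (aw_gamma q A B C).
  rewrite /aw_gamma -/c; apply: (@dirD F q hq h4 _ _ _ _ c1 c2); rewrite -eC //.
have [f [fX fY fL _]] := UO Delta A B (aw_gamma q A B C) HJ.
have HR := @dirO F q hq h4 _ _ _ _ HO.
have [g [gA gB gC _]] := UD OJ X Y _ HR.
exists f; split => //.
have fg : forall d, f (g d) = d.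
  have [h [hA hB hC hU]] := UD Delta A B C HD.
  move=> d.
  have E1 := hU (f \o g : {lrmorphism Delta -> Delta}).
  have E2 := hU (idfun : {lrmorphism Delta -> Delta}).
  rewrite /= in E1 E2.
  rewrite (E1 _ _ _ d); first by rewrite -(E2 erefl erefl erefl d).
  - by rewrite gA fX.
  - by rewrite gB fY.
  rewrite gC fC0 fZ fX fY fL /C0.
  by rewrite /aw_gamma scalerA mulVf // scale1r /aw_cC addrK.
have gf : forall o, g (f o) = o.
  have [h [hA hB hC hU]] := UO OJ X Y L HO.
  move=> o.
  have E1 := hU (g \o f : {lrmorphism OJ -> OJ}).
  have E2 := hU (idfun : {lrmorphism OJ -> OJ}).
  rewrite /= in E1 E2.
  rewrite (E1 _ _ _ o); first by rewrite -(E2 erefl erefl erefl o).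
  - by rewrite fX gA.
  - by rewrite fY gB.
  rewrite fL /aw_gamma fZ fcC gA gB gC /aw_cC.
  by rewrite /C0 subrK scalerA mulfV // scale1r.
by exists g.
Qed.
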